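(* Let $n_1,m_1,n_2,m_2\in\mathbb{N}$, $c\in\mathbb{R}^{n_1}$, $A\in\mathbb{R}^{m_1\times n_1}$, $b\in\mathbb{R}^{m_1}$. Let $\boldsymbol{\xi}$ be a random vector taking values in a finite set $\mathcal{S}$ of scenarios with probabilities $\mathbb{P}(\xi)$, and for each $\xi\in\mathcal{S}$ let $q(\xi)\in\mathbb{R}^{n_2}$, $T(\xi)\in\mathbb{R}^{m_2\times n_1}$, $W(\xi)\in\mathbb{R}^{m_2\times n_2}$, $h(\xi)\in\mathbb{R}^{m_2}$. For $x\in\mathbb{R}^{n_1}$ and $\xi\in\mathcal{S}$ let $$Q(x,\xi)=\max\{\langle q(\xi),y\rangle:\ T(\xi)x+W(\xi)y\le h(\xi),\ y\ge 0,\ y\in\mathbb{R}^{n_2}\},$$ and let $$z^*=\max\{\langle c,x\rangle+\mathbb{E}_{\boldsymbol{\xi}}[Q(x,\boldsymbol{\xi})]:\ Ax\le b,\ x\ge 0\}$$ be the optimal objective value of the two-stage stochastic program. Let $R=\max\{\|x\|_2: Ax\le b,\ x\ge 0\}$, let $\tilde x$ be an optimal solution of $\max\{\langle c,x\rangle: Ax\le b,\ x\ge 0\}$, and for $\tau\ge 0$ let $\tilde x_\tau$ denote the solution of the convex problem $$\max\{\langle c,x_\tau\rangle:\ Ax_\tau\le b,\ \|x_\tau\|_2\le\tau,\ x_\tau\ge 0\}. \qquad (\ast)$$ Let $\varepsilon>0$ and assume all of the following: (a) the set $\{x: Ax\le b,\ x\ge 0\}$ is nonempty and bounded, and for each $\tau\ge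 0$ problem $(\ast)$ is feasible and has a unique solution; (b) for every $\xi\in\mathcal{S}$ and every $x\in\mathbb{R}^{n_1}$ with $\|x\|_2\le R$, the linear program defining $Q(x,\xi)$ is feasible and bounded; (c) for every $x\in\mathbb{R}^{n_1}$ with $\|x\|_2\le R$, $\big|\mathbb{E}_{\boldsymbol{\xi}}Q(x,\boldsymbol{\xi})-\mathbb{E}_{\boldsymbol{\xi}}Q((\|x\|_2,0,\dots,0)^\top,\boldsymbol{\xi})\big|\le\varepsilon$; (d) whenever $\|\tilde x\|_2\le\tau_1\le\tau_2\le R$, $\mathbb{E}_{\boldsymbol{\xi}}[Q((\tau_1,0,\dots,0)^\top,\boldsymbol{\xi})]\ge\mathbb{E}_{\boldsymbol{\xi}}[Q((\tau_2,0,\dots,0)^\top,\boldsymbol{\xi})]-\varepsilon$. Define $$\hat z^*=\max\Big\{\langle c,\tilde x_\tau\rangle+\mathbb{E}_{\boldsymbol{\xi}}[Q((\|\tilde x_\tau\|_2,0,\dots,0)^\top,\boldsymbol{\xi})]:\ 0\le\tau\le R\Big\}.$$ Then $|z^*-\hat z^*|\le 2\varepsilon$.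
   Context: $\mathbb{E}_{\boldsymbol{\xi}}[f(\boldsymbol{\xi})]=\sum_{\xi\in\mathcal{S}}\mathbb{P}(\xi)f(\xi)$. Vector inequalities are componentwise. $(t,0,\dots,0)^\top\in\mathbb{R}^{n_1}$ denotes $t$ times the first standard basis vector. Condition (c) is called approximate rotational invariance and (d) approximate monotonicity in the paper. *)

(* Defs.v *)
From HB Require Import structures.
From mathcomp Require Import all_boot all_order all_algebra.
From mathcomp Require Import boolp classical_sets reals.
Set Implicit Arguments. Unset Strict Implicit. Unset Printing Implicit Defensive.
Import Order.TTheory GRing.Theory Num.Theory.
Local Open Scope ring_scope.
Local Open Scope classical_set_scope.

Definition dotv {R : realType} {n : nat} (u v : 'cV[R]_n) : R :=
  \sum_(i < n) u i 0 * v i 0.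

Definition norm2 {R : realType} {n : nat} (x : 'cV[R]_n) : R :=
  Num.sqrt (\sum_(i < n) x i 0 ^+ 2).

Definition lev {R : realType} {m : nat} (u v : 'cV[R]_m) : Prop :=
  forall i, u i 0 <= v i 0.

Definition nonnegv {R : realType} {n : nat} (x : 'cV[R]_n) : Prop :=
  forall i, 0 <= x i 0.

Definition e1 {R : realType} (n : nat) (t : R) : 'cV[R]_n :=
  \col_(i < n) (if val i == 0%N then t else 0).

Definition feas1 {R : realType} {m1 n1 : nat} (A : 'M[R]_(m1, n1)) (b : 'cV[R]_m1)
  (x : 'cV[R]_n1) : Prop := lev (A *m x) b /\ nonnegv x.

Definition feas2 {R : realType} {m2 n1 n2 : nat} (T : 'M[R]_(m2, n1))
  (W : 'M[R]_(m2, n2)) (h : 'cV[R]_m2) (x : 'cV[R]_n1) (y : 'cV[R]_n2) : Prop :=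
  lev (T *m x + W *m y) h /\ nonnegv y.

Definition Qvals {R : realType} {m2 n1 n2 : nat} (q : 'cV[R]_n2) (T : 'M[R]_(m2, n1))
  (W : 'M[R]_(m2, n2)) (h : 'cV[R]_m2) (x : 'cV[R]_n1) : set R :=
  [set v | exists y, feas2 T W h x y /\ v = dotv q y].

(* Q(x, xi): optimal value of the second-stage LP (its supremum, which is
   attained, i.e. the max, whenever the LP is feasible and bounded) *)
Definition Qfun {R : realType} {m2 n1 n2 : nat} (q : 'cV[R]_n2) (T : 'M[R]_(m2, n1))
  (W : 'M[R]_(m2, n2)) (h : 'cV[R]_m2) (x : 'cV[R]_n1) : R :=
  sup (Qvals q T W h x).

Definition expect {R : realType} {S : finType} (P : S -> R) (f : S -> R) : R :=
  \sum_(s : S) P s * f s.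

(* Main.v *)
Require Import Defs.
From HB Require Import structures.
From mathcomp Require Import all_boot all_order all_algebra.
From mathcomp Require Import boolp classical_sets reals.
From mathcomp.algebra_tactics Require Import ring lra.
Import Order.TTheory GRing.Theory Num.Theory.
Local Open Scope ring_scope.
Local Open Scope classical_set_scope.

Section Helpers.
Variable R : realType.

Lemma sup_close (X Y : set R) (d : R) : 0 <= d ->
  X !=set0 -> Y !=set0 ->
  (forall x, X x -> exists y, Y y /\ x <= y + d) ->
  (forall y, Y y -> exists x, X x /\ y <= x + d) ->
  `|sup X - sup Y| <= d.
Proof.
move=> d0 nX nY HXY HYX.
case: (pselect (has_ubound X)) => [[M HM]|nbX].
- have hX : has_sup X by split=> //; exists M.
  have hY : has_sup Y.
    split=> //; exists (M + d) => y Yy.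
    have [x [Xx le]] := HYX y Yy.
    by apply: (le_trans le); rewrite lerD2r; apply: HM.
  have h1 : sup X <= sup Y + d.
    apply: ge_sup => // x Xx.
    have [y [Yy le]] := HXY x Xx.
    apply: (le_trans le); rewrite lerD2r; exact: sup_upper_bound.
  have h2 : sup Y <= sup X + d.
    apply: ge_sup => // y Yy.
    have [x [Xx le]] := HYX y Yy.
    apply: (le_trans le); rewrite lerD2r; exact: sup_upper_bound.
  rewrite ler_norml; apply/andP; split; lra.
- have nbY : ~ has_ubound Y.
    move=> [M HM]; apply: nbX; exists (M + d) => x Xx.
    have [y [Yy le]] := HXY x Xx.
    by apply: (le_trans le); rewrite lerD2r; apply: HM.
  rewrite !sup_out; first by rewrite subrr normr0.
  - by case.
  - by case.
Qed.

Definition sqv {n} (x : 'cV[R]_n) := \sum_(i < n) x i 0 ^+ 2.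

Lemma sqv_ge0 n (x : 'cV[R]_n) : 0 <= sqv x.
Proof. by apply: sumr_ge0 => i _; apply: sqr_ge0. Qed.

Lemma sqv_norm n (x : 'cV[R]_n) : sqv x = norm2 x ^+ 2.
Proof. by rewrite /norm2 sqr_sqrtr // sqv_ge0. Qed.

Lemma norm2_ge0 n (x : 'cV[R]_n) : 0 <= norm2 x.
Proof. exact: sqrtr_ge0. Qed.

Lemma dotv_comb n (c u v : 'cV[R]_n) k1 k2 :
  dotv c (k1 *: u + k2 *: v) = k1 * dotv c u + k2 * dotv c v.
Proof.
rewrite /dotv !mulr_sumr -big_split /=; apply: eq_bigr => i _.
rewrite !mxE; ring.
Qed.

Lemma sqv_comb n (u v : 'cV[R]_n) l : 0 <= l <= 1 ->
  sqv ((1 - l) *: u + l *: v) <= (1 - l) * sqv u + l * sqv v.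
Proof.
move=> /andP[l0 l1].
rewrite /sqv !mulr_sumr -big_split /=; apply: ler_sum => i _.
rewrite !mxE.
have : 0 <= l * (1 - l) * (u i 0 - v i 0) ^+ 2.
  by apply: mulr_ge0; [apply: mulr_ge0; lra | apply: sqr_ge0].
move=> H; nra.
Qed.

Lemma feas_comb m n (A : 'M[R]_(m, n)) b (u v : 'cV[R]_n) l : 0 <= l <= 1 ->
  feas1 A b u -> feas1 A b v -> feas1 A b ((1 - l) *: u + l *: v).
Proof.
move=> /andP[l0 l1] [Au nu] [Av nv]; split.
- move=> i; move: (Au i) (Av i); rewrite mulmxDr -!scalemxAr !mxE.
  set x1 := (\sum_j _); set x2 := (\sum_j _) => h1 h2.
  have : 0 <= (1 - l) * (b i 0 - x1) by apply: mulr_ge0; lra.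
  have : 0 <= l * (b i 0 - x2) by apply: mulr_ge0; lra.
  lra.
- move=> i; rewrite !mxE; have := nu i; have := nv i; move=> h1 h2; nra.
Qed.

End Helpers.
Arguments sqv {R n}. Arguments norm2_ge0 {R n}. Arguments sqv_comb {R n}. Arguments feas_comb {R m n}.
Arguments dotv_comb {R n}. Arguments sqv_norm {R n}. Arguments sqv_ge0 {R n}. Arguments sup_close {R}.
Theorem proposition1 (R : realType) (n1 m1 n2 m2 : nat)
  (c : 'cV[R]_n1) (A : 'M[R]_(m1, n1)) (b : 'cV[R]_m1)
  (S : finType) (P : S -> R)
  (hP0 : forall s, 0 <= P s) (hP1 : \sum_(s : S) P s = 1)
  (q : S -> 'cV[R]_n2) (T : S -> 'M[R]_(m2, n1)) (W : S -> 'M[R]_(m2, n2))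
  (h : S -> 'cV[R]_m2)
  (xt : 'cV[R]_n1) (xtau : R -> 'cV[R]_n1) (eps : R)
  (* x~ is an optimal solution of max{<c,x> : Ax <= b, x >= 0} *)
  (hxt : feas1 A b xt /\ forall x, feas1 A b x -> dotv c x <= dotv c xt)
  (* x~_tau is the solution of ( * ) for every tau >= 0 *)
  (hxtau : forall tau, 0 <= tau ->
     (feas1 A b (xtau tau) /\ norm2 (xtau tau) <= tau) /\
     forall x, feas1 A b x -> norm2 x <= tau -> dotv c x <= dotv c (xtau tau))
  (heps : 0 < eps) :
  let EQ := fun x : 'cV[R]_n1 =>
    expect P (fun s => Qfun (q s) (T s) (W s) (h s) x) in
  let Rad := sup [set norm2 x | x in feas1 A b] in
  (* (a) *)
  (exists x, feas1 A b x) ->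
  (exists M : R, forall x, feas1 A b x -> norm2 x <= M) ->
  (forall tau, 0 <= tau -> forall x,
     (feas1 A b x /\ norm2 x <= tau) ->
     (forall x', feas1 A b x' -> norm2 x' <= tau -> dotv c x' <= dotv c x) ->
     x = xtau tau) ->
  (* (b) *)
  (forall s (x : 'cV[R]_n1), norm2 x <= Rad ->
     (exists y, feas2 (T s) (W s) (h s) x y) /\
     has_ubound (Qvals (q s) (T s) (W s) (h s) x)) ->
  (* (c) approximate rotational invariance *)
  (forall x : 'cV[R]_n1, norm2 x <= Rad -> `|EQ x - EQ (e1 n1 (norm2 x))| <= eps) ->
  (* (d) approximate monotonicity *)
  (forall tau1 tau2 : R, norm2 xt <= tau1 -> tau1 <= tau2 -> tau2 <= Rad ->
     EQ (e1 n1 tau2) - eps <= EQ (e1 n1 tau1)) ->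
  let zstar := sup [set dotv c x + EQ x | x in feas1 A b] in
  let zhat := sup [set dotv c (xtau tau) + EQ (e1 n1 (norm2 (xtau tau)))
                   | tau in [set t : R | 0 <= t <= Rad]] in
  `|zstar - zhat| <= 2 * eps.

Proof.
move=> EQ Rad [x0 Fx0] [M HM] Huniq _ Hc Hd /=.
case: hxt => Fxt optxt; clearbody EQ.
have hasRad : has_sup [set norm2 x | x in feas1 A b].
  split; first by exists (norm2 x0); exists x0.
  by exists M => _ [x Fx <-]; apply: HM.
have HR : forall x, feas1 A b x -> norm2 x <= Rad.
  by move=> x Fx; apply: sup_upper_bound => //; exists x.
have Rad0 : 0 <= Rad by apply: le_trans (HR _ Fx0); apply: norm2_ge0.
have HcL : forall x, feas1 A b x -> (EQ x <= EQ (e1 n1 (norm2 x)) + eps) /\ (EQ (e1 n1 (norm2 x)) <= EQ x + eps).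
  move=> x Fx; have := Hc x (HR x Fx); rewrite ler_norml => /andP[h1 h2].
  split; lra.
apply: sup_close.
- lra.
- by exists (dotv c x0 + EQ x0); exists x0.
- by exists (dotv c (xtau 0) + EQ (e1 n1 (norm2 (xtau 0)))); exists 0 => //=; rewrite lexx Rad0.
- move=> _ [x Fx <-].
  set tau := norm2 x.
  have tau0 : 0 <= tau by apply: norm2_ge0.
  have tauR : tau <= Rad by apply: HR.
  exists (dotv c (xtau tau) + EQ (e1 n1 (norm2 (xtau tau)))); split.
    by exists tau => //=; rewrite tau0 tauR.
  have [[Fa na] opta] := hxtau tau tau0.
  have cx : dotv c x <= dotv c (xtau tau) by apply: opta => //; rewrite lexx.
  have [Hc1 _] := HcL x Fx.
  case: (leP (norm2 xt) tau) => hxt.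
  + have Ea : xt = xtau tau.
      apply: (Huniq tau tau0 xt (conj Fxt hxt)) => x' Fx' _; exact: optxt.
    rewrite -Ea in cx *.
    have := Hd (norm2 xt) tau (lexx _) hxt tauR.
    rewrite -/tau; lra.
  + have Na : norm2 (xtau tau) = tau.
      apply/eqP; rewrite eq_le na /=; rewrite leNgt; apply/negP => lt.
      set a := xtau tau in Fa na opta lt cx *.
      set na2 := norm2 a in lt.
      have na0 : 0 <= na2 := norm2_ge0 a.
      set nt := norm2 xt in hxt.
      pose lam := (tau ^+ 2 - na2 ^+ 2) / (nt ^+ 2 - na2 ^+ 2).
      have den : 0 < nt ^+ 2 - na2 ^+ 2 by nra.
      have lam0 : 0 < lam by apply: divr_gt0 => //; nra.
      have lam1 : lam <= 1 by rewrite ler_pdivrMr // mul1r; nra.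
      have lamE : lam * (nt ^+ 2 - na2 ^+ 2) = tau ^+ 2 - na2 ^+ 2.
        by rewrite /lam mulfVK // gt_eqF.
      have l01 : 0 <= lam <= 1 by rewrite lam1 ltW.
      pose x' := (1 - lam) *: a + lam *: xt.
      have Fx' : feas1 A b x' by apply: feas_comb.
      have sx' : sqv x' <= tau ^+ 2.
        apply: le_trans (sqv_comb a xt lam l01) _.
        rewrite !sqv_norm -/na2 -/nt; nra.
      have nx' : norm2 x' <= tau.
        have : norm2 x' ^+ 2 <= tau ^+ 2 by rewrite -sqv_norm.
        have := norm2_ge0 x'; nra.
      have cxa : dotv c a <= dotv c xt by apply: optxt.
      have cx' : dotv c a <= dotv c x'.
        rewrite /x' dotv_comb; nra.
      have Ex' : x' = a.
        apply: (Huniq tau tau0 x' (conj Fx' nx')) => x'' Fx'' nx''.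
        exact: le_trans (opta x'' Fx'' nx'') cx'.
      have Ec : forall i, xt i 0 = a i 0.
        move=> i; have := congr1 (fun N : 'cV[R]_n1 => N i 0) Ex'.
        rewrite /= !mxE => h0.
        have : lam * (xt i 0 - a i 0) = 0 by lra.
        move/eqP; rewrite mulf_eq0 gt_eqF //= subr_eq0 => /eqP //.
      have : sqv xt = sqv a by apply: eq_bigr => i _; rewrite Ec.
      rewrite !sqv_norm -/na2 -/nt; nra.
    rewrite Na; lra.
- move=> _ [tau /andP[tau0 tauR] <-].
  have [[Fa na] opta] := hxtau tau tau0.
  exists (dotv c (xtau tau) + EQ (xtau tau)); split; first by exists (xtau tau).
  have [_ Hc2] := HcL _ Fa.
  lra.
Qed.
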